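(* Let $\kappa\ge0$, $\alpha\ge0$, $p,q\in[1,\infty]$, $\varepsilon,\widehat\varepsilon\ge0$, training points $(\boldsymbol x^i,y^i)$, $i\in[N]$, and auxiliary points $(\widehat{\boldsymbol x}^j,\widehat y^j)$, $j\in[\widehat N]$, be given. Consider the convex program (Inter-ARO$^\star$): $$\inf\ \varepsilon\lambda+\widehat\varepsilon\widehat\lambda+\frac1N\sum_{i=1}^N s_i+\frac1{\widehat N}\sum_{j=1}^{\widehat N}\widehat s_j$$ over $\boldsymbol\beta\in\mathbb{R}^n$, $\lambda\ge0$, $\widehat\lambda\ge0$, $\boldsymbol s\in\mathbb{R}^N_+$, $\widehat{\boldsymbol s}\in\mathbb{R}^{\widehat N}_+$, $\boldsymbol z^{l}_{ij}\in\mathbb{R}^n$ for $(i,j,l)\in[N]\times[\widehat N]\times\{-1,1\}$, subject to, for all $(i,j,l)\in[N]\times[\widehat N]\times\{-1,1\}$: $$L^\alpha\big(l\,\boldsymbol\beta^\top\boldsymbol x^i+(\boldsymbol z^l_{ij})^\top(\widehat{\boldsymbol x}^j-\boldsymbol x^i)\big)\le s_i+\frac{\kappa(1-ly^i)}2\lambda+\widehat s_j+\frac{\kappa(1-l\widehat y^j)}2\widehat\lambda,$$ $$\|l\boldsymbol\beta-\boldsymbol z^l_{ij}\|_{q^\star}\le\lambda,\qquad \|\boldsymbol z^l_{ij}\|_{q^\star}\le\widehat\lambda,$$ where $L^\alpha(z)=\log(1+\exp(-z+\alpha\|\boldsymbol\beta\|_{p^\star}))$. Then for every feasible point $(\boldsymbol\beta,\lambda,\widehat\lambda,\boldsymbol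 s,\widehat{\boldsymbol s},(\boldsymbol z^l_{ij}))$ of this program, $(\boldsymbol\beta,\lambda,\widehat\lambda,\boldsymbol s,\widehat{\boldsymbol s})$ satisfies all constraints of the semi-infinite program $$\sup_{\boldsymbol x\in\mathbb{R}^n}\{\ell^\alpha_{\boldsymbol\beta}(\boldsymbol x,l)-\lambda\|\boldsymbol x^i-\boldsymbol x\|_q-\widehat\lambda\|\widehat{\boldsymbol x}^j-\boldsymbol x\|_q\}\le s_i+\tfrac{\kappa(1-ly^i)}{2}\lambda+\widehat s_j+\tfrac{\kappa(1-l\widehat y^j)}{2}\widehat\lambda\ \ \forall (i,j,l),$$ and $\mathbb{E}_{\mathbb{Q}}[\ell^\alpha_{\boldsymbol\beta}(\boldsymbol x,y)]\le\varepsilon\lambda+\widehat\varepsilon\widehat\lambda+\frac1N\sum_i s_i+\frac1{\widehat N}\sum_j\widehat s_j$ for every $\mathbb{Q}\in\mathfrak B_\varepsilon(\mathbb{P}_N)\cap\mathfrak B_{\widehat\varepsilon}(\widehat{\mathbb{P}}_{\widehat N})$. In particular the optimal value of Inter-ARO$^\star$ is at least the optimal value of (Inter-ARO) $\inf_{\boldsymbol\beta}\sup_{\mathbb{Q}\in\mathfrak B_\varepsilon(\mathbb{P}_N)\cap\mathfrak B_{\widehat\varepsilon}(\widehat{\mathbb{P}}_{\widehat N})}\mathbb{E}_{\mathbb{Q}}[\ell^\alpha_{\boldsymbol\beta}(\boldsymbol x,y)]$.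
   Context: $1/p+1/p^\star=1$, $1/q+1/q^\star=1$. $\ell^\alpha_{\boldsymbol\beta}(\boldsymbol x,y)=\log(1+\exp(-y\boldsymbol\beta^\top\boldsymbol x+\alpha\|\boldsymbol\beta\|_{p^\star}))=L^\alpha(y\boldsymbol\beta^\top\boldsymbol x)$. $\Xi=\mathbb{R}^n\times\{-1,+1\}$ with metric $d((\boldsymbol x,y),(\boldsymbol x',y'))=\|\boldsymbol x-\boldsymbol x'\|_q+\kappa\mathbb 1[y\ne y']$; $\mathrm W$ is the induced type-1 Wasserstein distance on Borel probability measures with finite first moment; $\mathfrak B_\varepsilon(\mathbb{P})=\{\mathbb{Q}:\mathrm W(\mathbb{Q},\mathbb{P})\le\varepsilon\}$; $\mathbb{P}_N=\frac1N\sum_i\delta_{(\boldsymbol x^i,y^i)}$, $\widehat{\mathbb{P}}_{\widehat N}=\frac1{\widehat N}\sum_j\delta_{(\widehat{\boldsymbol x}^j,\widehat y^j)}$. The supremum over an empty set is $-\infty$. *)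

(* Defs.v *)
From HB Require Import structures.
From mathcomp Require Import all_boot all_order all_algebra.
From mathcomp Require Import all_classical all_reals all_analysis.

Set Implicit Arguments.
Unset Strict Implicit.
Unset Printing Implicit Defensive.
Import Order.TTheory GRing.Theory Num.Theory.
Import numFieldNormedType.Exports.

Local Open Scope classical_set_scope.
Local Open Scope ring_scope.

Section defs.
Variable R : realType.

(* R^n is represented by n.-tuple R, equipped (by MathComp-Analysis) with the
   product sigma-algebra of Borel sets, i.e. the Borel sigma-algebra of R^n. *)
Definition vsub n (x y : n.-tuple R) : n.-tuple R :=
  [tuple tnth x i - tnth y i | i < n].
Definition vscale n (a : R) (x : n.-tuple R) : n.-tuple R :=
  [tuple a * tnth x i | i < n].
Definition dot n (x y : n.-tuple R) : R := \sum_(i < n) tnth x i * tnth y i.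

Definition pnorm n (p : \bar R) (x : n.-tuple R) : R :=
  match p with
  | EFin r => (\sum_(i < n) `|tnth x i| `^ r) `^ r^-1
  | _ => \big[Num.max/0]_(i < n) `|tnth x i|
  end.

(* Hoelder conjugate exponent: 1/p + 1/p^* = 1 *)
Definition dual_exp (p : \bar R) : \bar R :=
  match p with
  | EFin r => if r == 1 then +oo%E else (r / (r - 1))%:E
  | +oo%E => 1%:E
  | -oo%E => -oo%E
  end.

(* labels {-1,+1} encoded as bool: true = +1, false = -1 *)
Definition lab (b : bool) : R := if b then 1 else -1.

Definition Lalpha n (alpha : R) (p : \bar R) (beta : n.-tuple R) (z : R) : R :=
  ln (1 + expR (- z + alpha * pnorm (dual_exp p) beta)).

Definition ell n (alpha : R) (p : \bar R) (beta : n.-tuple R) (x : n.-tuple R)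
  (y : bool) : R := Lalpha alpha p beta (lab y * dot beta x).

Definition Xi n := (n.-tuple R * bool)%type.

Definition cost n (kappa : R) (q : \bar R) (a b : Xi n) : R :=
  pnorm q (vsub a.1 b.1) + kappa * (a.2 != b.2)%:R.

Definition coupling n (pi : probability (Xi n * Xi n)%type R)
  (Q P : set (Xi n) -> \bar R) : Prop :=
  forall A : set (Xi n), measurable A ->
    pi (A `*` setT) = Q A /\ pi (setT `*` A) = P A.

Definition W n (kappa : R) (q : \bar R) (Q P : set (Xi n) -> \bar R) : \bar R :=
  ereal_inf [set v | exists pi : probability (Xi n * Xi n)%type R,
    coupling pi Q P /\ v = (\int[pi]_z (cost kappa q z.1 z.2)%:E)%E].

Definition finite_first_moment n (kappa : R) (q : \bar R)
  (Q : probability (Xi n) R) : Prop :=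
  exists xi0 : Xi n, (\int[Q]_z (cost kappa q z xi0)%:E < +oo)%E.

Definition empirical n N (xi : 'I_N -> Xi n) : set (Xi n) -> \bar R :=
  fun A => ((N%:R^-1)%:E * \sum_(i < N) \d_(xi i) A)%E.

Definition in_balls n N Nh (kappa : R) (q : \bar R) (eps epsh : R)
  (X : 'I_N -> n.-tuple R) (Y : 'I_N -> bool)
  (Xh : 'I_Nh -> n.-tuple R) (Yh : 'I_Nh -> bool)
  (Q : probability (Xi n) R) : Prop :=
  finite_first_moment kappa q Q /\
  (W kappa q Q (empirical (fun i => (X i, Y i))) <= eps%:E)%E /\
  (W kappa q Q (empirical (fun j => (Xh j, Yh j))) <= epsh%:E)%E.

Definition expect_loss n (alpha : R) (p : \bar R) (beta : n.-tuple R)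
  (Q : probability (Xi n) R) : \bar R :=
  (\int[Q]_z (ell alpha p beta z.1 z.2)%:E)%E.

Definition obj N Nh (eps epsh lam lamh : R) (s : 'I_N -> R) (sh : 'I_Nh -> R) : R :=
  eps * lam + epsh * lamh + N%:R^-1 * \sum_(i < N) s i
  + Nh%:R^-1 * \sum_(j < Nh) sh j.

Definition rhs N Nh (kappa lam lamh : R) (s : 'I_N -> R) (sh : 'I_Nh -> R)
  (Y : 'I_N -> bool) (Yh : 'I_Nh -> bool) (i : 'I_N) (j : 'I_Nh) (l : bool) : R :=
  s i + kappa * (1 - lab l * lab (Y i)) / 2 * lam
  + sh j + kappa * (1 - lab l * lab (Yh j)) / 2 * lamh.

Definition feasible_star n N Nh (kappa alpha : R) (p q : \bar R)
  (X : 'I_N -> n.-tuple R) (Y : 'I_N -> bool)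
  (Xh : 'I_Nh -> n.-tuple R) (Yh : 'I_Nh -> bool)
  (beta : n.-tuple R) (lam lamh : R) (s : 'I_N -> R) (sh : 'I_Nh -> R)
  (z : 'I_N -> 'I_Nh -> bool -> n.-tuple R) : Prop :=
  0 <= lam /\ 0 <= lamh /\ (forall i, 0 <= s i) /\ (forall j, 0 <= sh j) /\
  forall i j l,
    Lalpha alpha p beta
      (lab l * dot beta (X i) + dot (z i j l) (vsub (Xh j) (X i)))
      <= rhs kappa lam lamh s sh Y Yh i j l /\
    pnorm (dual_exp q) (vsub (vscale (lab l) beta) (z i j l)) <= lam /\
    pnorm (dual_exp q) (z i j l) <= lamh.

Definition semi_infinite_feasible n N Nh (kappa alpha : R) (p q : \bar R)
  (X : 'I_N -> n.-tuple R) (Y : 'I_N -> bool)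
  (Xh : 'I_Nh -> n.-tuple R) (Yh : 'I_Nh -> bool)
  (beta : n.-tuple R) (lam lamh : R) (s : 'I_N -> R) (sh : 'I_Nh -> R) : Prop :=
  forall i j l,
    (ereal_sup [set (ell alpha p beta x l - lam * pnorm q (vsub (X i) x)
                     - lamh * pnorm q (vsub (Xh j) x))%:E | x in [set: n.-tuple R]]
     <= (rhs kappa lam lamh s sh Y Yh i j l)%:E)%E.

Definition value_star n N Nh (kappa alpha eps epsh : R) (p q : \bar R)
  (X : 'I_N -> n.-tuple R) (Y : 'I_N -> bool)
  (Xh : 'I_Nh -> n.-tuple R) (Yh : 'I_Nh -> bool) : \bar R :=
  ereal_inf [set v | exists (beta : n.-tuple R) (lam lamh : R)
      (s : 'I_N -> R) (sh : 'I_Nh -> R) (z : 'I_N -> 'I_Nh -> bool -> n.-tuple R),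
    feasible_star kappa alpha p q X Y Xh Yh beta lam lamh s sh z /\
    v = (obj eps epsh lam lamh s sh)%:E].

Definition value_aro n N Nh (kappa alpha eps epsh : R) (p q : \bar R)
  (X : 'I_N -> n.-tuple R) (Y : 'I_N -> bool)
  (Xh : 'I_Nh -> n.-tuple R) (Yh : 'I_Nh -> bool) : \bar R :=
  ereal_inf [set ereal_sup [set expect_loss alpha p beta Q |
      Q in [set Q : probability (Xi n) R |
              in_balls kappa q eps epsh X Y Xh Yh Q]]
    | beta in [set: n.-tuple R]].

End defs.

(* Main.v *)
Require Import Defs.
From HB Require Import structures.
From mathcomp Require Import all_boot all_order all_algebra.
From mathcomp Require Import all_classical all_reals all_analysis.
From mathcomp Require Import ring lra.
From mathcomp Require Import measurable_realfun.
Import Order.TTheory GRing.Theory Num.Theory.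
Import numFieldNormedType.Exports.
Set Implicit Arguments.
Unset Strict Implicit.
Unset Printing Implicit Defensive.
Local Open Scope classical_set_scope.
Local Open Scope ring_scope.

Section hold.
Context {R : realType}.

Definition ext n (c : 'I_n -> R) (k : nat) : R :=
  if @insub _ (fun k => (k < n)%N) 'I_n k is Some i then c i else 0.

Lemma ext_ord n (c : 'I_n -> R) (i : 'I_n) : ext c i = c i.
Proof. by rewrite /ext valK. Qed.

Lemma ext_out n (c : 'I_n -> R) k : (n <= k)%N -> ext c k = 0.
Proof. by move=> h; rewrite /ext insubF // ltnNge h. Qed.

Lemma series_ext n (c : 'I_n -> R) (F : R -> R) : F 0 = 0 -> (forall x, 0 <= F x) ->
  (\big[+%E/0%R]_(0 <= k <oo) (F (ext c k))%:E)%E = (\sum_(i < n) F (c i))%:E.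
Proof.
move=> F0 Fge0.
rewrite (nneseries_split 0 n); last by move=> k _; rewrite lee_fin.
rewrite add0n ereal_series_cond eseries0 ?adde0; last first.
  move=> k _ /andP[hk _]; by rewrite ext_out // F0.
rewrite big_mkord sumEFin; congr (_%:E); apply: eq_bigr => i _.
by rewrite ext_ord.
Qed.


Lemma hoelder_fin n (a b : 'I_n -> R) (p q : R) :
  (forall i, 0 <= a i) -> (forall i, 0 <= b i) ->
  0 < p -> 0 < q -> p^-1 + q^-1 = 1 ->
  \sum_i a i * b i <= (\sum_i a i `^ p) `^ p^-1 * (\sum_i b i `^ q) `^ q^-1.
Proof.
move=> a0 b0 p0 q0 pq.
have mf (c : 'I_n -> R) : measurable_fun setT (ext c) by [].
have := hoelder counting (mf a) (mf b) p0 q0 pq.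
rewrite !Lnorm_counting//.
have e1 (c : 'I_n -> R) r : 0 < r ->
  (\big[+%E/0%R]_(0 <= k <oo) `|(EFin \o ext c) k| `^ r)%E = (\sum_i `|c i| `^ r)%:E.
  move=> r0.
  rewrite -(series_ext (F := fun x => `|x| `^ r) c); last 2 first.
  - by rewrite normr0 powR0 // gt_eqF.
  - by move=> x; rewrite powR_ge0.
  - apply: eq_eseriesr => k _ /=.
    by [].
have extM k : (ext a \* ext b)%R k = ext (fun i => a i * b i) k.
  by rewrite /ext /=; case: insub => [i|] //=; rewrite mulr0.
have e2 : (\big[+%E/0%R]_(0 <= k <oo) `|(EFin \o (ext a \* ext b)%R) k| `^ 1)%E
   = (\sum_i `|a i * b i| `^ 1)%:E.
  rewrite -(e1 _ _ ltr01); apply: eq_eseriesr => k _ /=.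
  by rewrite -extM.
rewrite e2 (e1 _ _ p0) (e1 _ _ q0) !poweR_EFin -EFinM lee_fin.
rewrite invr1 powRr1; last by rewrite sumr_ge0 // => i _; rewrite powR_ge0.
have -> : \sum_i `|a i * b i| `^ 1 = \sum_i a i * b i.
  by apply: eq_bigr => i _; rewrite powRr1 ?normr_ge0 // ger0_norm ?mulr_ge0.
have -> : \sum_i `|a i| `^ p = \sum_i a i `^ p.
  by apply: eq_bigr => i _; rewrite ger0_norm.
have -> : \sum_i `|b i| `^ q = \sum_i b i `^ q.
  by apply: eq_bigr => i _; rewrite ger0_norm.
by [].
Qed.
End hold.

Section H2.
Context {R : realType}.
Implicit Types (n : nat).

Lemma pnorm_ge0 n (p : \bar R) (x : n.-tuple R) : 0 <= pnorm p x.
Proof.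
case: p => [r| |] /=; first exact: powR_ge0.
- by elim/big_ind: _ => // a b ha hb; rewrite le_max ha.
- by elim/big_ind: _ => // a b ha hb; rewrite le_max ha.
Qed.

Lemma pnorm1 n (x : n.-tuple R) : pnorm 1%:E x = \sum_i `|tnth x i|.
Proof.
rewrite /= invr1 powRr1; last by rewrite sumr_ge0 // => i _; rewrite powR_ge0.
by apply: eq_bigr => i _; rewrite powRr1.
Qed.

Lemma pnormy n (x : n.-tuple R) i : `|tnth x i| <= pnorm +oo%E x.
Proof. exact: le_bigmax. Qed.

Lemma dot_abs n (u v : n.-tuple R) : `|dot u v| <= \sum_i `|tnth u i| * `|tnth v i|.
Proof.
rewrite /dot; apply: le_trans (ler_norm_sum _ _ _) _.
by apply: ler_sum => i _; rewrite normrM.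
Qed.

Lemma hoelder_dot n (q : \bar R) (u v : n.-tuple R) : (1%:E <= q)%E ->
  `|dot u v| <= pnorm (dual_exp q) u * pnorm q v.
Proof.
move=> q1; apply: (le_trans (dot_abs u v)).
case: q q1 => [r| |] //=; rewrite ?lee_fin => r1.
- have [r1'|r1'] := eqVneq r 1.
    subst r; rewrite -/(pnorm 1%:E v) pnorm1 mulr_sumr.
    apply: ler_sum => i _; apply: ler_wpM2r => //; exact: pnormy.
  have rgt1 : 1 < r by rewrite lt_neqAle eq_sym r1' r1.
  rewrite [pnorm _ u]/=.
  apply: hoelder_fin => //.
  + by rewrite divr_gt0 // ?subr_gt0 // (lt_trans ltr01).
  + exact: lt_trans ltr01 rgt1.
  + have r0 : r != 0 by rewrite gt_eqF // (lt_trans ltr01).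
    have r10 : r - 1 != 0 by rewrite subr_eq0 r1'.
    by rewrite invf_div; field.
- rewrite -/(pnorm 1%:E u) pnorm1 mulr_suml.
  apply: ler_sum => i _; apply: ler_wpM2l => //; exact: pnormy.
Qed.
End H2.

Section H3.
Context {R : realType}.
Implicit Types (n : nat).

Lemma L_ge0 n (alpha : R) p (beta : n.-tuple R) z : 0 <= Lalpha alpha p beta z.
Proof. by rewrite /Lalpha ln_ge0 // lerDl ltW // expR_gt0. Qed.

Lemma L_anti n (alpha : R) p (beta : n.-tuple R) z1 z2 : z1 <= z2 ->
  Lalpha alpha p beta z2 <= Lalpha alpha p beta z1.
Proof.
move=> h; rewrite /Lalpha ler_ln ?posrE ?addr_gt0 ?expR_gt0 //.
by rewrite lerD2l ler_expR lerD2r lerN2.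
Qed.

Lemma L_shift n (alpha : R) p (beta : n.-tuple R) z c : 0 <= c ->
  Lalpha alpha p beta (z - c) <= Lalpha alpha p beta z + c.
Proof.
move=> c0; rewrite /Lalpha.
set w := alpha * _.
have -> : c = ln (expR c) by rewrite expRK.
rewrite -lnM ?posrE ?addr_gt0 ?expR_gt0 //.
rewrite ler_ln ?posrE ?mulr_gt0 ?addr_gt0 ?expR_gt0 //.
rewrite mulrDl mul1r expRK.
have -> : - (z - c) + w = (- z + w) + c by ring.
rewrite expRD; apply: lerD => //.
by rewrite -expR0 ler_expR.
Qed.

Lemma pnorm_eq n p (x y : n.-tuple R) : (forall i, `|tnth x i| = `|tnth y i|) ->
  pnorm p x = pnorm p y.
Proof.
move=> h; case: p => [r| |] /=.
- by congr (_ `^ _); apply: eq_bigr => i _; rewrite h.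
- by apply: eq_bigr => i _; rewrite h.
- by apply: eq_bigr => i _; rewrite h.
Qed.

Lemma pnorm_vsubC n p (x y : n.-tuple R) : pnorm p (vsub x y) = pnorm p (vsub y x).
Proof. by apply: pnorm_eq => i; rewrite !tnth_mktuple distrC. Qed.

Lemma key_identity n (l : R) (beta x Xi Xh z : n.-tuple R) :
  l * dot beta x - (l * dot beta Xi + dot z (vsub Xh Xi)) =
  dot (vsub (vscale l beta) z) (vsub x Xi) + dot z (vsub x Xh).
Proof.
rewrite /dot !mulr_sumr -big_split -sumrB -big_split /=.
apply: eq_bigr => i _; rewrite !tnth_mktuple; ring.
Qed.

Lemma dot_lb n (q : \bar R) (u v : n.-tuple R) (lam : R) : (1%:E <= q)%E ->
  pnorm (dual_exp q) u <= lam -> - (lam * pnorm q v) <= dot u v.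
Proof.
move=> q1 hu; rewrite lerNl.
apply: le_trans (ler_norm _) _; rewrite normrN.
apply: le_trans (hoelder_dot u v q1) _.
by rewrite ler_wpM2r // pnorm_ge0.
Qed.

Lemma pointwise n (kappa alpha : R) (p q : \bar R) (beta Xi Xh z x : n.-tuple R)
   (l : bool) (lam lamh rhsv : R) : (1%:E <= q)%E ->
  Lalpha alpha p beta (lab R l * dot beta Xi + dot z (vsub Xh Xi)) <= rhsv ->
  pnorm (dual_exp q) (vsub (vscale (lab R l) beta) z) <= lam ->
  pnorm (dual_exp q) z <= lamh ->
  ell alpha p beta x l - lam * pnorm q (vsub Xi x) - lamh * pnorm q (vsub Xh x)
   <= rhsv.
Proof.
move=> q1 hL h1 h2.
set A := lab R l * dot beta Xi + dot z (vsub Xh Xi).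
set c := lam * pnorm q (vsub Xi x) + lamh * pnorm q (vsub Xh x).
have c0 : 0 <= c.
  rewrite /c addr_ge0 // mulr_ge0 ?pnorm_ge0 //.
  + exact: le_trans (pnorm_ge0 _ _) h1.
  + exact: le_trans (pnorm_ge0 _ _) h2.
have hz : A - c <= lab R l * dot beta x.
  rewrite lerBlDr -lerBlDl -lerN2 opprB /A key_identity /c.
  rewrite opprD (pnorm_vsubC _ Xi) (pnorm_vsubC _ Xh).
  apply: lerD; exact: dot_lb.
have -> : ell alpha p beta x l - lam * pnorm q (vsub Xi x) -
  lamh * pnorm q (vsub Xh x) = ell alpha p beta x l - c by rewrite /c; ring.
rewrite lerBlDr.
apply: (le_trans (L_anti alpha p beta hz)).
apply: (le_trans (L_shift alpha p beta A c0)).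
by rewrite lerD2r.
Qed.
End H3.

Section H4.
Context {R : realType}.
Implicit Types (n : nat).

Lemma measurable_bigmax d (T : measurableType d) (I : Type) (s : seq I)
  (f : I -> T -> R) : (forall i, measurable_fun setT (f i)) ->
  measurable_fun setT (fun t => \big[Num.max/0]_(i <- s) f i t).
Proof.
move=> mf; elim: s => [|a s IH].
  by under eq_fun do rewrite big_nil; exact: measurable_cst.
under eq_fun do rewrite big_cons.
exact: measurable_maxr.
Qed.

Lemma measurable_pnorm d (T : measurableType d) n p (F : T -> n.-tuple R) :
  (forall i, measurable_fun setT (fun t => tnth (F t) i)) ->
  measurable_fun setT (fun t => pnorm p (F t)).
Proof.
move=> mF; case: p => [r| |] /=.
- apply: (measurableT_comp (measurable_powR _)).
  apply: measurable_sum => i.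
  apply: (measurableT_comp (measurable_powR _)).
  exact: (measurableT_comp (@normr_measurable R setT)).
- apply: (@measurable_bigmax _ _ _ _ (fun i t => `|tnth (F t) i|)) => i.
  exact: (measurableT_comp (@normr_measurable R setT)).
- apply: (@measurable_bigmax _ _ _ _ (fun i t => `|tnth (F t) i|)) => i.
  exact: (measurableT_comp (@normr_measurable R setT)).
Qed.

Lemma measurable_boolR d (T : measurableType d) (g : T -> bool) :
  measurable_fun setT g -> measurable_fun setT (fun t => (g t)%:R : R).
Proof. by move=> mg; apply: (measurableT_comp (f := fun b : bool => b%:R : R)). Qed.

Lemma neq_abs (a b : bool) : (a != b)%:R = `|a%:R - b%:R| :> R.
Proof. by case: a; case: b => //=; rewrite ?subrr ?normr0 ?subr0 ?normr1 // sub0r normrN normr1. Qed.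

Lemma measurable_cost_prod n (kappa : R) q :
  measurable_fun setT (fun z : Xi R n * Xi R n => cost kappa q z.1 z.2).
Proof.
rewrite /cost; apply: measurable_funD.
  apply: measurable_pnorm => i.
  under eq_fun do rewrite tnth_mktuple.
  apply: measurable_funB.
  + apply: (measurableT_comp (measurable_tnth i)).
    exact: (measurableT_comp measurable_fst measurable_fst).
  + apply: (measurableT_comp (measurable_tnth i)).
    exact: (measurableT_comp measurable_fst measurable_snd).
apply: measurable_funM; first exact: measurable_cst.
under eq_fun do rewrite neq_abs.
apply: (measurableT_comp (@normr_measurable R setT)).
apply: measurable_funB; apply: measurable_boolR.
+ exact: (measurableT_comp measurable_snd measurable_fst).
+ exact: (measurableT_comp measurable_snd measurable_snd).
Qed.

Lemma measurable_cost_r n (kappa : R) q (c : Xi R n) :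
  measurable_fun setT (fun a : Xi R n => cost kappa q a c).
Proof.
have -> : (fun a : Xi R n => cost kappa q a c) =
  (fun z : Xi R n * Xi R n => cost kappa q z.1 z.2) \o (fun a => (a, c)) by [].
apply: measurableT_comp; first exact: measurable_cost_prod.
apply: measurable_fun_pair => //; exact: measurable_cst.
Qed.

End H4.

Section H5.
Context {R : realType}.
Variables (n N : nat) (xi : 'I_N -> Xi R n) (s : 'I_N -> R) (lam kappa : R)
  (q : \bar R).
Hypotheses (lam0 : 0 <= lam) (s0 : forall i, 0 <= s i) (kappa0 : 0 <= kappa).

Definition Fi (i : 'I_N) (a : Xi R n) : R := s i + lam * cost kappa q a (xi i).
Definition Gmin (i0 : 'I_N) (a : Xi R n) : R := \big[Num.min/Fi i0 a]_i Fi i a.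

Lemma cost_ge0 (a b : Xi R n) : 0 <= cost kappa q a b.
Proof. by rewrite /cost addr_ge0 ?pnorm_ge0 // mulr_ge0. Qed.

Lemma Fi_ge0 i a : 0 <= Fi i a.
Proof. by rewrite /Fi addr_ge0 // mulr_ge0 // cost_ge0. Qed.

Lemma Gmin_le i0 a i : Gmin i0 a <= Fi i a.
Proof. exact: bigmin_le. Qed.

Lemma le_Gmin i0 a t : (forall i, t <= Fi i a) -> t <= Gmin i0 a.
Proof. by move=> h; apply: le_bigmin. Qed.

Lemma Gmin_ge0 i0 a : 0 <= Gmin i0 a.
Proof. by apply: le_Gmin => i; exact: Fi_ge0. Qed.

Lemma measurable_Fi i : measurable_fun setT (Fi i).
Proof.
apply: measurable_funD; first exact: measurable_cst.
apply: measurable_funM; first exact: measurable_cst.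
exact: measurable_cost_r.
Qed.

Lemma measurable_Gmin i0 : measurable_fun setT (Gmin i0).
Proof.
rewrite /Gmin; elim: (index_enum _) => [|a r IH].
  by under eq_fun do rewrite big_nil; exact: measurable_Fi.
under eq_fun do rewrite big_cons.
apply: measurable_minr => //; exact: measurable_Fi.
Qed.

Definition cnt (i : 'I_N) : R := \sum_k \1_[set xi i] (xi k).
Definition Sf (b : Xi R n) : R := \sum_i (s i / cnt i) * \1_[set xi i] b.

Lemma cnt_gt0 i : 0 < cnt i.
Proof.
rewrite /cnt (bigD1 i) //= indicE mem_set // ltr_pwDl //.
by rewrite sumr_ge0 // => k _; rewrite indicE.
Qed.

Lemma indic1 (a b : Xi R n) : \1_[set a] b = (b == a)%:R :> R.
Proof.
rewrite indicE; have [->|h] := eqVneq b a; first by rewrite mem_set.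
by rewrite memNset //= => e; move: h; rewrite e eqxx.
Qed.

Lemma S_bound i0 a k : Gmin i0 a <= Sf (xi k) + lam * cost kappa q a (xi k).
Proof.
have ck := cnt_gt0 k.
have key : cnt k * Gmin i0 a <= \sum_i \1_[set xi i] (xi k) * Fi i a.
  rewrite /cnt mulr_suml; apply: ler_sum => i _.
  rewrite !indic1 eq_sym; case: eqP => _; rewrite ?mul1r ?mul0r //.
  exact: Gmin_le.
have eS : \sum_i \1_[set xi i] (xi k) * Fi i a =
    cnt k * Sf (xi k) + cnt k * (lam * cost kappa q a (xi k)).
  rewrite /Sf /cnt mulr_sumr mulr_suml -big_split /=.
  apply: eq_bigr => i _; rewrite !indic1 [xi i == _]eq_sym.
  have [e|ne] := eqVneq (xi k) (xi i); last by rewrite !(mulr0n, mul0r, mulr0, addr0).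
  rewrite !mulr1 !mul1r /Fi -e -/(cnt k).
  by rewrite mulrCA mulfV ?mulr1 // gt_eqF.
rewrite -(ler_pM2l ck) mulrDr -eS; exact: key.
Qed.
End H5.

Section H6.
Context {R : realType}.

Lemma measurable_tuple1 n (x : n.-tuple R) : measurable [set x].
Proof.
have -> : [set x] = \bigcap_(i in [set: 'I_n]) ((tnth (T:=R))^~ i @^-1` [set tnth x i]).
  apply/funext => y; apply/propext; split => [-> i _ //|h].
  by apply: eq_from_tnth => i; exact: h.
apply: fin_bigcap_measurable; first exact: finite_finset.
move=> i _; rewrite -[X in measurable X]setTI.
by apply: measurable_tnth => //; exact: measurable_set1.
Qed.

Lemma measurable_Xi1 n (a : Xi R n) : measurable [set a].
Proof.
have -> : [set a] = [set a.1] `*` [set a.2].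
  apply/funext => -[x y]; apply/propext; case: a => a1 a2 /=; split.
  + by case=> -> ->.
  + by rewrite /setX /= => -[-> ->].
by apply: measurableX; [exact: measurable_tuple1|].
Qed.


Lemma int_fst n (Q : probability (Xi R n) R)
  (pi : probability (Xi R n * Xi R n)%type R) (f : Xi R n -> \bar R) :
  measurable_fun setT f -> (forall x, (0 <= f x)%E) ->
  (forall A, measurable A -> pi (A `*` setT) = Q A) ->
  (\int[Q]_x f x = \int[pi]_z f z.1)%E.
Proof.
move=> mf f0 hA.
have -> : (\int[Q]_x f x = \int[pushforward pi fst]_x f x)%E.
  apply: eq_measure_integral => A mA _.
  have e : A `*` [set: Xi R n] = (@fst _ (Xi R n)) @^-1` A.
    by apply/funext => -[x y]; rewrite /setX /preimage /=; apply/propext; split => [[]|].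
  by apply: esym; apply: eq_trans (hA A mA); rewrite e.
by rewrite ge0_integral_pushforward.
Qed.

Lemma indicX2 n (A : set (Xi R n)) (z : Xi R n * Xi R n) :
  \1_(setT `*` A) z = \1_A z.2 :> R.
Proof. by rewrite !indicE in_setX in_setT. Qed.

Section cb.
Variables (n N : nat) (xi : 'I_N -> Xi R n) (s : 'I_N -> R) (lam kappa : R)
  (q : \bar R).
Hypotheses (lam0 : 0 <= lam) (s0 : forall i, 0 <= s i) (kappa0 : 0 <= kappa).
Variables (Q : probability (Xi R n) R)
  (pi : probability (Xi R n * Xi R n)%type R).
Hypothesis hc : coupling pi Q (empirical xi).

Local Open Scope ereal_scope.

Lemma Sf_ge0 b : (0 <= Sf xi s b)%R.
Proof.
apply: sumr_ge0 => i _; have c0 := cnt_gt0 xi i.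
by rewrite mulr_ge0 ?divr_ge0 ?(ltW c0) // indicE.
Qed.

Lemma measurable_Sf : measurable_fun setT (Sf xi s).
Proof.
apply: measurable_sum => i; apply: measurable_funM; first exact: measurable_cst.
apply: measurable_indic; exact: measurable_Xi1.
Qed.

Lemma int_Sf : \int[pi]_z (Sf xi s z.2)%:E = (N%:R^-1 * \sum_i s i)%:E.
Proof.
rewrite /Sf.
under eq_integral do rewrite -sumEFin.
rewrite ge0_integral_sum //; last 2 first.
- move=> i; apply/measurable_EFinP; apply: measurable_funM; first exact: measurable_cst.
  under eq_fun do rewrite -indicX2.
  by apply: measurable_indic; apply: measurableX => //; exact: measurable_Xi1.
- move=> i z _; have c0 := cnt_gt0 xi i.
  by rewrite lee_fin mulr_ge0 ?divr_ge0 ?(ltW c0) // indicE.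
rewrite mulr_sumr -sumEFin; apply: eq_bigr => i _.
under eq_integral do rewrite EFinM -indicX2.
rewrite ge0_integralZl //; last 2 first.
- apply: measurableT_comp => //; apply: measurable_indic.
  by apply: measurableX => //; exact: measurable_Xi1.
- have c0 := cnt_gt0 xi i.
  by rewrite lee_fin divr_ge0 ?(ltW c0).
rewrite integral_indic //; last by apply: measurableX => //; exact: measurable_Xi1.
rewrite setIT.
rewrite [X in (_ * X)%E](_ : _ = empirical xi [set xi i]); last first.
  exact: (proj2 (hc (measurable_Xi1 (xi i)))).
rewrite /empirical.
have -> : \sum_(k < N) \d_(xi k) [set xi i] = (cnt xi i)%:E.
  rewrite /cnt -sumEFin; apply: eq_bigr => k _; by rewrite diracE indicE.
rewrite -!EFinM; congr (_%:E).
have := cnt_gt0 xi i; move: (cnt xi i) => c c0.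
by rewrite mulrCA -mulrA mulVf ?mulr1 ?gt_eqF // mulrC.
Qed.


Lemma coupling_bound (i0 : 'I_N) :
  \int[Q]_a (Gmin xi s lam kappa q i0 a)%:E <=
  (N%:R^-1 * \sum_i s i)%:E + lam%:E * \int[pi]_z (cost kappa q z.1 z.2)%:E.
Proof.
rewrite (@int_fst n Q pi (fun a => (Gmin xi s lam kappa q i0 a)%:E)); last 3 first.
- apply: measurableT_comp => //; exact: measurable_Gmin.
- by move=> a; rewrite lee_fin Gmin_ge0.
- by move=> A mA; exact: (proj1 (hc mA)).
set supp := \bigcup_(i in [set: 'I_N]) [set xi i].
have msupp : measurable supp.
  apply: fin_bigcup_measurable; first exact: finite_finset.
  by move=> i _; exact: measurable_Xi1.
apply: (@le_trans _ _ (\int[pi]_z (Sf xi s z.2 + lam * cost kappa q z.1 z.2)%:E)).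
  apply: ae_ge0_le_integral => //.
  - by move=> z _; rewrite lee_fin Gmin_ge0.
  - apply: measurableT_comp => //; apply: measurableT_comp => //; exact: measurable_Gmin.
  - by move=> z _; rewrite lee_fin addr_ge0 ?Sf_ge0 // mulr_ge0 // cost_ge0.
  - apply: measurableT_comp => //; apply: measurable_funD.
      by apply: measurableT_comp => //; exact: measurable_Sf.
    apply: measurable_funM; first exact: measurable_cst.
    exact: measurable_cost_prod.
  exists (setT `*` ~` supp); split.
  - by apply: measurableX => //; exact: measurableC.
  - rewrite [X in X = _](_ : _ = empirical xi (~` supp)); last first.
      exact: (proj2 (hc (measurableC msupp))).
    rewrite /empirical big1 ?mule0 // => k _.
    rewrite diracE memNset //= => h; apply: h.
    by exists k.
  - move=> [a b] /= hn; split => //= hb.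
    apply: hn => _; case: hb => k _ ->.
    by rewrite lee_fin S_bound.
under eq_integral do rewrite EFinD EFinM.
rewrite ge0_integralD //; last 4 first.
- by move=> z _; rewrite lee_fin Sf_ge0.
- by apply: measurableT_comp => //; apply: measurableT_comp => //; exact: measurable_Sf.
- by move=> z _; rewrite mule_ge0 // lee_fin cost_ge0.
- under eq_fun do rewrite -EFinM.
  apply: measurableT_comp => //; apply: measurable_funM; first exact: measurable_cst.
  exact: measurable_cost_prod.
rewrite ge0_integralZl //; last 2 first.
- by apply: measurableT_comp => //; exact: measurable_cost_prod.
- by move=> z _; rewrite lee_fin cost_ge0.
by rewrite int_Sf.
Qed.

End cb.
End H6.

Section H7.
Context {R : realType}.

Lemma lab_term (kappa : R) (l y : bool) :
  kappa * (1 - lab R l * lab R y) / 2 = kappa * (l != y)%:R.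
Proof. by case: l; case: y; rewrite /lab /=; field. Qed.

Lemma measurable_ell n (alpha : R) (p : \bar R) (beta : n.-tuple R) :
  measurable_fun setT (fun a : Xi R n => ell alpha p beta a.1 a.2).
Proof.
rewrite /ell /Lalpha.
apply: (measurableT_comp (@measurable_ln R)).
apply: measurable_funD; first exact: measurable_cst.
apply: (measurableT_comp (@measurable_expR R)).
apply: measurable_funD; last exact: measurable_cst.
apply: measurable_funN.
apply: measurable_funM.
  apply: (measurableT_comp (f := fun b : bool => lab R b)) => //.
apply: measurable_sum => k; apply: measurable_funM; first exact: measurable_cst.
apply: (measurableT_comp (measurable_tnth k)).
exact: measurable_fst.
Qed.


Section main.
Variables (n N Nh : nat) (kappa alpha : R) (p q : \bar R)
  (X : 'I_N -> n.-tuple R) (Y : 'I_N -> bool)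
  (Xh : 'I_Nh -> n.-tuple R) (Yh : 'I_Nh -> bool)
  (beta : n.-tuple R) (lam lamh : R) (s : 'I_N -> R) (sh : 'I_Nh -> R)
  (z : 'I_N -> 'I_Nh -> bool -> n.-tuple R).
Hypotheses (kappa0 : 0 <= kappa) (q1 : (1%:E <= q)%E).
Hypothesis hf : feasible_star kappa alpha p q X Y Xh Yh beta lam lamh s sh z.

Let xi := fun i => (X i, Y i).
Let xih := fun j => (Xh j, Yh j).

Lemma part_a : semi_infinite_feasible kappa alpha p q X Y Xh Yh beta lam lamh s sh.
Proof.
move=> i j l; apply: ge_ereal_sup => _ [x _ <-].
have [_ [_ [_ [_ h]]]] := hf; have [h1 [h2 h3]] := h i j l.
by rewrite lee_fin; exact: (pointwise kappa x q1 h1 h2 h3).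
Qed.

Lemma ell_le_F (a : Xi R n) i j :
  ell alpha p beta a.1 a.2 <= Fi xi s lam kappa q i a + Fi xih sh lamh kappa q j a.
Proof.
have [_ [_ [_ [_ h]]]] := hf; have [h1 [h2 h3]] := h i j a.2.
have := pointwise kappa a.1 q1 h1 h2 h3.
rewrite /rhs /Fi /cost /xi /xih /= !lab_term (pnorm_vsubC _ a.1) (pnorm_vsubC _ a.1).
rewrite !lerBlDr => H; apply: (le_trans H).
rewrite le_eqVlt; apply/orP; left; apply/eqP; ring.
Qed.


Lemma ell_le_GH (a : Xi R n) i0 j0 :
  ell alpha p beta a.1 a.2 <=
  Gmin xi s lam kappa q i0 a + Gmin xih sh lamh kappa q j0 a.
Proof.
rewrite -lerBlDr; apply: le_Gmin => i.
rewrite lerBlDr addrC -lerBlDr; apply: le_Gmin => j.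
by rewrite lerBlDr addrC; exact: ell_le_F.
Qed.

Variables (eps epsh : R).
Hypotheses (N0 : (0 < N)%N) (Nh0 : (0 < Nh)%N).

Lemma get_coupling (Q : probability (Xi R n) R) m (xs : 'I_m -> Xi R n) (e d : R) :
  0 < d -> (W kappa q Q (empirical xs) <= e%:E)%E ->
  exists pi : probability (Xi R n * Xi R n)%type R,
    coupling pi Q (empirical xs) /\
    (\int[pi]_z (cost kappa q z.1 z.2)%:E <= (e + d)%:E)%E.
Proof.
move=> d0 hW.
have : (W kappa q Q (empirical xs) < (e + d)%:E)%E.
  by apply: (le_lt_trans hW); rewrite lte_fin ltrDl.
move=> /ereal_inf_lt [v [pi [hc ->]] hv].
by exists pi; split => //; exact: ltW.
Qed.

Lemma part_b (Q : probability (Xi R n) R) :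
  in_balls kappa q eps epsh X Y Xh Yh Q ->
  (expect_loss alpha p beta Q <= (obj eps epsh lam lamh s sh)%:E)%E.
Proof.
move=> [_ [hW1 hW2]].
have [lam0 [lamh0 [s0 [sh0 _]]]] := hf.
pose i0 : 'I_N := Ordinal N0.
pose j0 : 'I_Nh := Ordinal Nh0.
apply/lee_addgt0Pr => e e0.
pose d := e / (lam + lamh + 1).
have d0 : 0 < d by rewrite divr_gt0 // ltr_wpDl // addr_ge0.
have [pi1 [hc1 hi1]] := get_coupling d0 hW1.
have [pi2 [hc2 hi2]] := get_coupling d0 hW2.
have hG := coupling_bound q lam0 s0 kappa0 hc1 i0.
have hH := coupling_bound q lamh0 sh0 kappa0 hc2 j0.
rewrite /expect_loss.
apply: (@le_trans _ _ (\int[Q]_a ((Gmin xi s lam kappa q i0 a)%:E +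
                                 (Gmin xih sh lamh kappa q j0 a)%:E))%E).
  apply: ge0_le_integral => //.
  - by move=> a _; rewrite lee_fin L_ge0.
  - by apply: measurableT_comp => //; exact: measurable_ell.
  - apply: emeasurable_funD.
    + by apply: measurableT_comp => //; exact: measurable_Gmin.
    + by apply: measurableT_comp => //; exact: measurable_Gmin.
  - by move=> a _; rewrite -EFinD lee_fin ell_le_GH.
rewrite ge0_integralD //; last 4 first.
- by move=> a _; rewrite lee_fin Gmin_ge0.
- by apply: measurableT_comp => //; exact: measurable_Gmin.
- by move=> a _; rewrite lee_fin Gmin_ge0.
- by apply: measurableT_comp => //; exact: measurable_Gmin.
apply: le_trans (leeD hG hH) _.
have l0 : (0 <= lam%:E)%E by rewrite lee_fin.
have lh0 : (0 <= lamh%:E)%E by rewrite lee_fin.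
have k1 := lee_wpmul2l l0 hi1.
have k2 := lee_wpmul2l lh0 hi2.
apply: le_trans (leeD (leeD (lexx _) k1) (leeD (lexx _) k2)) _.
rewrite -!EFinM -!EFinD lee_fin.
have hd : (lam + lamh) * d <= e.
  rewrite /d mulrA ler_pdivrMr ?ltr_wpDl ?addr_ge0 //.
  by rewrite mulrC ler_pM2l // lerDl.
rewrite /obj; lra.
Qed.

End main.
End H7.

Unset Implicit Arguments.
Theorem theorem1 (R : realType) (n N Nh : nat)
  (kappa alpha eps epsh : R) (p q : \bar R)
  (X : 'I_N -> n.-tuple R) (Y : 'I_N -> bool)
  (Xh : 'I_Nh -> n.-tuple R) (Yh : 'I_Nh -> bool) :
  0 <= kappa -> 0 <= alpha -> (1%:E <= p)%E -> (1%:E <= q)%E ->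
  0 <= eps -> 0 <= epsh -> (0 < N)%N -> (0 < Nh)%N ->
  (forall (beta : n.-tuple R) (lam lamh : R) (s : 'I_N -> R) (sh : 'I_Nh -> R)
          (z : 'I_N -> 'I_Nh -> bool -> n.-tuple R),
     feasible_star kappa alpha p q X Y Xh Yh beta lam lamh s sh z ->
     semi_infinite_feasible kappa alpha p q X Y Xh Yh beta lam lamh s sh /\
     (forall Q : probability (Xi R n) R,
        in_balls kappa q eps epsh X Y Xh Yh Q ->
        (expect_loss alpha p beta Q <= (obj eps epsh lam lamh s sh)%:E)%E)) /\
  (value_aro kappa alpha eps epsh p q X Y Xh Yh
     <= value_star kappa alpha eps epsh p q X Y Xh Yh)%E.
Proof.
move=> k0 a0 p1 q1 e0 eh0 N0 Nh0.
split.
  move=> beta lam lamh s sh z hf; split; first exact: part_a q1 hf.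
  by move=> Q hQ; exact: (part_b k0 q1 hf N0 Nh0 hQ).
apply: le_ereal_inf_tmp => _ [beta [lam [lamh [s [sh [z [hf ->]]]]]]].
have hS : (value_aro kappa alpha eps epsh p q X Y Xh Yh <=
    ereal_sup [set expect_loss alpha p beta Q | Q in [set Q : probability (Xi R n) R |
              in_balls kappa q eps epsh X Y Xh Yh Q]])%E.
  by apply: ereal_inf_lbound; exists beta.
apply: le_trans hS _.
apply: ge_ereal_sup => _ [Q hQ <-].
exact: (part_b k0 q1 hf N0 Nh0 hQ).
Qed.
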